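(* For every real $n$ with $$1<n<\frac{\sqrt{(1+\sqrt2)/2}+1}{\sqrt{(1+\sqrt2)/2}-1}=21.2666866\ldots,$$ we have $$\sum_{k=0}^\infty\frac{(2(n^2+6n+1)^2(n^2-10n+1)k+P(n))(n-1)^{4k}}{(-n)^k(n+1)^{2k}\binom{4k}{2k}}=6n(n+1)(n-1)^3\log n-32n(n+1)^2(n^2-4n+1),$$ where $P(n)=n^6-58n^5+159n^4+52n^3+159n^2-58n+1$. In particular, \begin{align*} \sum_{k=0}^\infty\frac{2890k-563}{(-18)^k\binom{4k}{2k}}&=-12(\log2+48),\\ \sum_{k=0}^\infty\frac{245k-17}{(-3)^k\binom{4k}{2k}}&=-24-\frac92\log3,\\ \sum_{k=0}^\infty\frac{(77326k+8951)81^k}{(-100)^k\binom{4k}{2k}}&=40(80-81\log4),\\ \sum_{k=0}^\infty\frac{(196k+73)64^k}{(-45)^k\binom{4k}{2k}}&=15(3-\log5),\\ \sum_{k=0}^\infty\frac{(245134k+181679)625^k}{(-294)^k\binom{4k}{2k}}&=84(1456-375\log6),\\ \sum_{k=0}^\infty\frac{(2645k+3517)81^k}{(-28)^k\binom{4k}{2k}}&=7(352-81\log7),\\ \sum_{k=0}^\infty\frac{(127890k+316933)2401^k}{(-648)^k\binom{4k}{2k}}&=144(1584-343\log8),\\ \sum_{k=0}^\infty\frac{(1156k+7031)1024^k}{(-225)^k\binom{4k}{2k}}&=45(115-24\log9),\\ \sum_{k=0}^\infty\frac{(51842k-3142679)6561^k}{(-1210)^k\binom{4k}{2k}}&=220(2187\log10-10736),\\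 \sum_{k=0}^\infty\frac{(2209k-13421)625^k}{(-99)^k\binom{4k}{2k}}&=\frac{99}2(125\log11-624),\\ \sum_{k=0}^\infty\frac{(2354450k-8037191)14641^k}{(-2028)^k\binom{4k}{2k}}&=312(3993\log12-20176),\\ \sum_{k=0}^\infty\frac{(19220k-46979)5184^k}{(-637)^k\binom{4k}{2k}}&=91(81\log13-413),\\ \sum_{k=0}^\infty\frac{(3000515k-5794357)28561^k}{(-3150)^k\binom{4k}{2k}}&=420(2197\log14-11280),\\ \sum_{k=0}^\infty\frac{(118579k-190573)2401^k}{(-240)^k\binom{4k}{2k}}&=30(1029\log15-5312),\\ \sum_{k=0}^\infty\frac{(24174146k-33367199)50625^k}{(-4624)^k\binom{4k}{2k}}&=544(10125\log16-52496),\\ \sum_{k=0}^\infty\frac{(48020k-58117)16384^k}{(-1377)^k\binom{4k}{2k}}&=459(64\log17-333),\\ \sum_{k=0}^\infty\frac{(54371810k-58537799)83521^k}{(-6498)^k\binom{4k}{2k}}&=684(14739\log18-76912),\\ \sum_{k=0}^\infty\frac{(608923k-589327)6561^k}{(-475)^k\binom{4k}{2k}}&=\frac{95}2(2187\log19-11440),\\ \sum_{k=0}^\infty\frac{(36377094k-31893853)130321^k}{(-8820)^k\binom{4k}{2k}}&=840(6859\log20-35952),\\ \sum_{k=0}^\infty\frac{(584756k-467339)40000^k}{(-2541)^k\binom{4k}{2k}}&=231(375\log21-1969),\\ \sum_{k=0}^\infty\frac{(661704134402k-517115569199)43046721^k}{(-2693140)^k\binom{4k}{2k}}&=60520\left(1594323\log\frac{85}4-8374544\right).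 \end{align*}
   Context: $\log$ is the natural logarithm. *)

(* Defs.v *)
From Stdlib Require Import Reals.
From Coquelicot Require Import Coquelicot.
Open Scope R_scope.

Definition Ppoly (n : R) : R :=
  n^6 - 58*n^5 + 159*n^4 + 52*n^3 + 159*n^2 - 58*n + 1.

Definition binom4k2k (k : nat) : R := Binomial.C (4*k) (2*k).

Definition upper_bound : R :=
  (sqrt ((1 + sqrt 2) / 2) + 1) / (sqrt ((1 + sqrt 2) / 2) - 1).

Definition term (n : R) (k : nat) : R :=
  ((2 * (n^2 + 6*n + 1)^2 * (n^2 - 10*n + 1) * INR k + Ppoly n) * (n - 1)^(4*k))
  / ((- n)^k * (n + 1)^(2*k) * binom4k2k k).

(* Main.v *)
Require Import Defs.
From Stdlib Require Import Reals Lra Lia Factorial.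
From Coquelicot Require Import Coquelicot.
Open Scope R_scope.

Lemma iR_plus (f g : R -> R) a b (x y : R) : is_RInt f a b x -> is_RInt g a b y ->
  is_RInt (fun t => f t + g t) a b (x + y).
Proof. intros H1 H2. exact (is_RInt_plus f g a b x y H1 H2). Qed.
Lemma iR_minus (f g : R -> R) a b (x y : R) : is_RInt f a b x -> is_RInt g a b y ->
  is_RInt (fun t => f t - g t) a b (x - y).
Proof. intros H1 H2. exact (is_RInt_minus f g a b x y H1 H2). Qed.
Lemma iR_scal (f : R -> R) a b (k x : R) : is_RInt f a b x ->
  is_RInt (fun t => k * f t) a b (k * x).
Proof. intros H1. exact (is_RInt_scal f a b k x H1). Qed.
Lemma iR_val (f : R -> R) a b (x y : R) : is_RInt f a b x -> x = y -> is_RInt f a b y.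
Proof. intros H ->; exact H. Qed.
Lemma iR_ext (f g : R -> R) a b (x : R) : (forall t, a <= t <= b -> f t = g t) -> a <= b -> is_RInt f a b x -> is_RInt g a b x.
Proof. intros H Hab H1. apply (is_RInt_ext f). rewrite Rmin_left, Rmax_right by lra.
 intros t Ht; apply H; lra. exact H1. Qed.
Lemma FTC (F f : R -> R) (a b v : R) : a <= b -> (forall x, a <= x <= b -> is_derive F x (f x)) ->
  (forall x, a <= x <= b -> continuous f x) -> F b - F a = v -> is_RInt f a b v.
Proof. intros Hab H1 H2 <-. apply (is_RInt_derive F f); rewrite Rmin_left, Rmax_right by lra; auto. Qed.

Lemma cod (f:R->R) x : ex_derive f x -> continuous f x.
Proof. intro H. exact (@ex_derive_continuous R_AbsRing R_NormedModule f x H). Qed.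

Lemma beta (b a : nat) : is_RInt (fun t => t^a*(1-t)^b) 0 1
   (INR (fact a) * INR (fact b) / INR (Factorial.fact (a+b+1))).
Proof.
revert a. induction b as [|b IH]; intros a.
- apply (FTC (fun t => t^(S a)/(INR a + 1))). lra.
  + intros x _. auto_derive. pose proof (pos_INR a); lra. simpl pred. change (match a with 0%nat => 1 | S _ => INR a + 1 end) with (INR (S a)). rewrite S_INR. simpl. field. pose proof (pos_INR a); lra.
  + intros x _. apply cod. auto_derive. auto.
  + rewrite Nat.add_0_r, Nat.add_1_r. rewrite pow_i by lia. rewrite pow1. rewrite fact_simpl, mult_INR, S_INR.
    simpl (Factorial.fact 0). rewrite INR_1. field. split. apply INR_fact_neq_0. pose proof (pos_INR a); lra.
- assert (H1 : is_RInt (fun t => INR (S a) * (t^a*(1-t)^(S b)) - INR (S b) * (t^(S a)*(1-t)^b)) 0 1 0).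
  { apply (FTC (fun t => t^(S a)*(1-t)^(S b))). lra.
    + intros x _. auto_derive. auto. change (match a with 0%nat => 1 | S _ => INR a + 1 end) with (INR (S a)). change (match b with 0%nat => 1 | S _ => INR b + 1 end) with (INR (S b)). rewrite !S_INR. unfold Rminus. cbn [pow]. ring.
    + intros x _. apply cod. auto_derive. auto.
    + rewrite pow_i by lia. rewrite Rminus_diag, pow_i by lia. ring. }
  pose proof (iR_scal _ _ _ (INR (S b)) _ (IH (S a))) as H2.
  pose proof (iR_plus _ _ _ _ _ _ H1 H2) as H3.
  pose proof (iR_scal _ _ _ (/ INR (S a)) _ H3) as H4.
  eapply iR_val. eapply iR_ext; [|lra| exact H4].
  + intros t _. rewrite !S_INR. unfold Rminus. cbn [pow]. field. pose proof (pos_INR a); lra.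
  + replace (S a + b + 1)%nat with (a + S b + 1)%nat by lia.
    rewrite !(fact_simpl a), !(fact_simpl b), !mult_INR, !S_INR. field; repeat split; try apply INR_fact_neq_0; pose proof (pos_INR a); lra.
Qed.

Lemma lim_inv_INR : is_lim_seq (fun N => / INR N) 0.
Proof.
  pose proof (is_lim_seq_inv INR p_infty is_lim_seq_INR) as H.
  simpl in H. apply H. discriminate.
Qed.

Lemma lim_poly_geom q : 0 < q < 1 -> is_lim_seq (fun N => INR N ^ 2 * q ^ N) 0.
Proof.
  intros [Hq0 Hq1].
  set (s := sqrt (sqrt q)).
  assert (Hsq : 0 < sqrt q) by (apply sqrt_lt_R0; lra).
  assert (Hs0 : 0 < s) by (apply sqrt_lt_R0; lra).
  assert (Hs4 : s ^ 4 = q).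
  { replace 4%nat with (2*2)%nat by reflexivity. rewrite pow_mult.
    unfold s. rewrite pow2_sqrt by lra. rewrite pow2_sqrt by lra. reflexivity. }
  assert (Hs1 : s < 1).
  { destruct (Rlt_or_le s 1) as [H|H]; auto.
    assert (1 <= s^4). { pose proof (pow_incr 1 s 4) as Hp. rewrite pow1 in Hp. apply Hp. lra. } lra. }
  set (h := / s - 1).
  assert (Hh : 0 < h). { unfold h. assert (1 < / s). { rewrite <- Rinv_1. apply Rinv_lt_contravar; lra. } lra. }
  assert (Bern : forall N, s ^ N * (1 + INR N * h) <= 1).
  { intros N. induction N as [|N IH].
    - simpl. lra.
    - rewrite S_INR. simpl pow.
      assert (Hsh : s * (1 + h) = 1). { unfold h. field. lra. }
      assert (0 <= s ^ N) by (apply pow_le; lra).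
      pose proof (pos_INR N).
      assert (s * s ^ N * (1 + (INR N + 1) * h) = s^N * (1 + INR N * h) * (s * (1+h)) - s * s^N * INR N * h * h) by ring.
      rewrite H1, Hsh.
      assert (0 <= s * s^N * INR N * h * h).
      { apply Rmult_le_pos; [|lra]. apply Rmult_le_pos; [|lra]. apply Rmult_le_pos; [|lra]. nra. }
      lra. }
  apply (is_lim_seq_le_le (fun _ => 0) _ (fun N => / h^3 * / INR N)).
  - intros N. split.
    + apply Rmult_le_pos. apply pow2_ge_0. apply pow_le; lra.
    + destruct N as [|N].
      * simpl. rewrite Rinv_0. lra.
      * set (x := INR (S N)).
        assert (Hx : 0 < x) by (unfold x; apply lt_0_INR; lia).
        specialize (Bern (S N)). fold x in Bern.
        set (P := s ^ S N) in *.
        assert (HP : 0 < P) by (unfold P; apply pow_lt; lra).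
        assert (HqN : q ^ S N = P ^ 4). { unfold P. rewrite <- Hs4. rewrite <- !pow_mult. f_equal. lia. }
        rewrite HqN.
        assert (HP1 : P <= 1). { assert (0 <= P * (x*h)) by (apply Rmult_le_pos; nra). lra. }
        assert (Hy : 0 < x * h) by nra.
        assert (Hkey : (x*h)^3 * P^4 <= 1).
        { assert (Hz: x*h*P <= 1) by nra.
          assert (0 <= x*h*P) by nra.
          assert ((x*h*P)^3 <= 1). { pose proof (pow_incr (x*h*P) 1 3) as Hp. rewrite pow1 in Hp. apply Hp. lra. }
          assert ((x*h)^3 * P^4 = (x*h*P)^3 * P) by ring.
          assert ((x*h*P)^3 * P <= 1 * 1). { apply Rmult_le_compat; try lra. apply pow_le; lra. }
          lra. }
        apply (Rmult_le_reg_r (h^3 * x)). apply Rmult_lt_0_compat; [apply pow_lt|]; lra.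
        replace (/ h ^ 3 * / x * (h ^ 3 * x)) with 1 by (field; lra).
        replace (x ^ 2 * P ^ 4 * (h ^ 3 * x)) with ((x*h)^3 * P^4) by ring. exact Hkey.
  - apply is_lim_seq_const.
  - replace (Finite 0) with (Rbar_mult (/ h^3) 0) by (simpl; f_equal; ring).
    apply is_lim_seq_scal_l. apply lim_inv_INR.
Qed.

Definition cc (n:R) := (n-1)^4/(n*(n+1)^2).
Definition gg (n x : R) := (2 * (n^2 + 6*n + 1)^2 * (n^2 - 10*n + 1) * x + Ppoly n) * (4*x+1).
Definition GG (n x w : R) := gg n x/(1-w) + (gg n (x+1) - gg n x)*w/(1-w)^2
   + (gg n (x+2) - 2*gg n (x+1) + gg n x)*w^2/(1-w)^3.
Definition wt (n t : R) := - cc n * (t*(1-t))^2.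
Definition MM (n u:R) := (16*n - 32*n^2 - 96*n^3 - 32*n^4 + 16*n^5)
 + (1 - 38*n + 143*n^2 - 212*n^3 + 143*n^4 - 38*n^5 + n^6)*u
 + (32 - 352*n + 1120*n^2 - 1600*n^3 + 1120*n^4 - 352*n^5 + 32*n^6)*u^2
 - 3*(n-1)^10/(n*(n+1)^2)*u^3.
Definition al (n:R) := 3*n*(n+1)*(n-1)^3.
Definition FF n t := al n * (ln (((n-1)*t+1)^2 + n) - ln (((n-1)*t-n)^2+n))
  + (1-2*t) * MM n (t*(1-t)) / (1 + cc n * (t*(1-t))^2)^2.
Definition RHS (n:R) := 6 * n * (n + 1) * (n - 1)^3 * ln n - 32 * n * (n + 1)^2 * (n^2 - 4*n + 1).

Lemma cc_pos n : 1 < n -> 0 < cc n.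
Proof. intros Hn. unfold cc. apply Rdiv_lt_0_compat. apply pow_lt; lra.
  apply Rmult_lt_0_compat; [lra| apply pow_lt; lra]. Qed.

Lemma D_pos n t : 1 < n -> 0 < 1 - wt n t.
Proof. intros Hn. unfold wt. pose proof (cc_pos n Hn). pose proof (pow2_ge_0 (t*(1-t))).
  assert (0 <= cc n * (t*(1-t))^2) by (apply Rmult_le_pos; lra). lra. Qed.

Lemma GG_step n x w : 1 - w <> 0 -> GG n x w = gg n x + w * GG n (x+1) w.
Proof. intros H. unfold GG, gg. field. exact H. Qed.

Lemma fsum n w N : 1 - w <> 0 ->
  @eq R (sum_n (fun k => gg n (INR k) * w^k) N) (GG n 0 w - w^(S N) * GG n (INR (S N)) w).
Proof.
  intros H. induction N as [|N IH].
  - rewrite sum_O. rewrite (GG_step n 0 w H). simpl INR. replace (0+1) with 1 by ring. ring.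
  - rewrite sum_Sn. change (plus ?a ?b) with (a + b). rewrite IH.
    rewrite (GG_step n (INR (S N)) w H). rewrite (S_INR (S N)).
    cbn [pow]. ring.
Qed.

Lemma term_eq n k : 1 < n ->
  term n k = gg n (INR k) * (- cc n)^k * (INR (fact (2*k)) * INR (fact (2*k)) / INR (fact (2*k+2*k+1))).
Proof.
  intros Hn. unfold term, binom4k2k, Binomial.C, gg.
  replace (4*k - 2*k)%nat with (2*k)%nat by lia.
  replace (2*k+2*k+1)%nat with (S (4*k)) by lia.
  rewrite fact_simpl, mult_INR, S_INR.
  replace (- cc n) with ((n-1)^4 * / (-n * (n+1)^2)) by (unfold cc; field; lra).
  rewrite Rpow_mult_distr, pow_inv, Rpow_mult_distr, <- !pow_mult.
  rewrite mult_INR. replace (INR 4) with 4 by (simpl; ring).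
  assert ((-n)^k <> 0) by (apply pow_nonzero; lra).
  assert ((n+1)^(2*k) <> 0) by (apply pow_nonzero; lra).
  assert ((n-1)^(4*k) <> 0) by (apply pow_nonzero; lra).
  pose proof (INR_fact_neq_0 (2*k)). pose proof (INR_fact_neq_0 (4*k)).
  pose proof (pos_INR k).
  field. repeat split; auto. lra.
Qed.

Lemma term_int n k : 1 < n ->
  is_RInt (fun t => gg n (INR k) * (wt n t)^k) 0 1 (term n k).
Proof.
  intros Hn. rewrite term_eq by exact Hn.
  pose proof (iR_scal _ _ _ (gg n (INR k) * (- cc n)^k) _ (beta (2*k) (2*k))) as H.
  eapply iR_val. eapply iR_ext; [| lra | exact H].
  - intros t _. unfold wt. rewrite Rpow_mult_distr, <- pow_mult, Rpow_mult_distr. ring.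
  - ring.
Qed.

Lemma sum_int n N : 1 < n ->
  is_RInt (fun t => @sum_n R_AbelianMonoid (fun k => gg n (INR k) * (wt n t)^k) N) 0 1 (@sum_n R_AbelianMonoid (term n) N).
Proof.
  intros Hn. induction N as [|N IH].
  - rewrite sum_O. eapply iR_ext; [| lra | apply (term_int n 0 Hn)].
    intros t _. rewrite sum_O. reflexivity.
  - rewrite sum_Sn. change (plus ?a ?b) with (a + b).
    eapply iR_ext; [| lra | apply (iR_plus _ _ _ _ _ _ IH (term_int n (S N) Hn))].
    intros t _. rewrite sum_Sn. reflexivity.
Qed.

Lemma FF_der n t : 1 < n -> is_derive (FF n) t (GG n 0 (wt n t)).
Proof.
  intros Hn. unfold FF, GG, gg, wt, MM, cc, al, Ppoly.
  assert (Hq1: 0 < ((n-1)*t+1)^2 + n) by (pose proof (pow2_ge_0 ((n-1)*t+1)); lra).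
  assert (Hq2: 0 < ((n-1)*t-n)^2 + n) by (pose proof (pow2_ge_0 ((n-1)*t-n)); lra).
  assert (Hc: 0 < (n-1)^4/(n*(n+1)^2)) by (apply (cc_pos n Hn)).
  assert (HD: 0 < 1 + (n-1)^4/(n*(n+1)^2) * (t*(1-t))^2).
  { pose proof (pow2_ge_0 (t*(1-t))).
    assert (0 <= (n-1)^4/(n*(n+1)^2) * (t*(1-t))^2) by (apply Rmult_le_pos; lra). lra. }
  assert (HD2: 0 < n*(n+1)^2 + (n-1)^4 * (t*(1-t))^2).
  { pose proof (pow2_ge_0 (t*(1-t))). pose proof (pow_lt (n-1) 4 ltac:(lra)).
    pose proof (pow_lt (n+1) 2 ltac:(lra)).
    assert (0 <= (n-1)^4 * (t*(1-t))^2) by (apply Rmult_le_pos; lra).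
    assert (0 < n*(n+1)^2) by (apply Rmult_lt_0_compat; lra). lra. }
  auto_derive.
  - unfold Rminus in *; simpl in *. repeat split; try lra. apply Rmult_integral_contrapositive; split; lra.
  - field. repeat split; try lra.
Qed.

Lemma E_cont n x m t : 1 < n -> continuous (fun t => (wt n t)^m * GG n x (wt n t)) t.
Proof.
  intros Hn. apply cod. pose proof (D_pos n t Hn) as HD.
  unfold GG, wt in *. auto_derive.
  unfold Rminus in *; simpl in *. repeat split; try lra. all: repeat apply Rmult_integral_contrapositive_currified; lra.
Qed.

Lemma main_int n : 1 < n -> is_RInt (fun t => GG n 0 (wt n t)) 0 1 (RHS n).
Proof.
  intros Hn. apply (FTC (FF n)). lra.
  - intros x _. apply FF_der; exact Hn.
  - intros x _. eapply continuous_ext; [| apply (E_cont n 0 0 x Hn)]. intros t. simpl. ring.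
  - unfold FF, RHS, MM, al.
    replace (((n - 1) * 1 + 1) ^ 2 + n) with (n * (n+1)) by ring.
    replace (((n - 1) * 1 - n) ^ 2 + n) with (n+1) by ring.
    replace (((n - 1) * 0 + 1) ^ 2 + n) with (n+1) by ring.
    replace (((n - 1) * 0 - n) ^ 2 + n) with (n * (n+1)) by ring.
    rewrite ln_mult by lra.
    field. lra.
Qed.

Definition EE n N t := (wt n t)^(S N) * GG n (INR (S N)) (wt n t).

Lemma sum_repr n N : 1 < n ->
  @sum_n R_AbelianMonoid (term n) N = RHS n - RInt (EE n N) 0 1.
Proof.
  intros Hn.
  assert (HE : ex_RInt (EE n N) 0 1).
  { apply (@ex_RInt_continuous R_CompleteNormedModule). intros z _. apply E_cont; exact Hn. }
  pose proof (iR_minus _ _ _ _ _ _ (main_int n Hn) (@RInt_correct R_CompleteNormedModule _ _ _ HE)) as H1.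
  pose proof (sum_int n N Hn) as H2.
  assert (H1' : is_RInt (fun t => @sum_n R_AbelianMonoid (fun k => gg n (INR k) * (wt n t)^k) N) 0 1
                  (RHS n - RInt (EE n N) 0 1)).
  { eapply iR_ext; [| lra | exact H1]. intros t _. rewrite fsum.
    - unfold EE. reflexivity.
    - pose proof (D_pos n t Hn); lra. }
  apply (@is_RInt_unique R_CompleteNormedModule) in H1'. apply (@is_RInt_unique R_CompleteNormedModule) in H2. rewrite <- H2. exact H1'.
Qed.

Definition KK n := 5 * (Rabs (2 * (n^2 + 6*n + 1)^2 * (n^2 - 10*n + 1)) + Rabs (Ppoly n)).

Lemma abs_gg n y : 1 <= y -> Rabs (gg n y) <= KK n * y^2.
Proof.
  intros Hy. unfold gg, KK. set (A := 2 * (n^2 + 6*n + 1)^2 * (n^2 - 10*n + 1)). set (B := Ppoly n).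
  rewrite Rabs_mult. rewrite (Rabs_pos_eq (4*y+1)) by lra.
  assert (H1 : Rabs (A*y + B) <= (Rabs A + Rabs B) * y).
  { eapply Rle_trans. apply Rabs_triang. rewrite Rabs_mult, (Rabs_pos_eq y) by lra.
    pose proof (Rabs_pos A); pose proof (Rabs_pos B). nra. }
  pose proof (Rabs_pos (A*y+B)).
  assert (Rabs (A*y+B) * (4*y+1) <= (Rabs A + Rabs B) * y * (5*y)).
  { apply Rmult_le_compat; lra. }
  lra.
Qed.

Lemma GG_bound n x w : -1 <= w <= 0 ->
  Rabs (GG n x w) <= 3 * Rabs (gg n x) + 3 * Rabs (gg n (x+1)) + Rabs (gg n (x+2)).
Proof.
  intros Hw. set (v := / (1 - w)).
  assert (Hv : 0 < v <= 1).
  { unfold v. split. apply Rinv_0_lt_compat; lra. rewrite <- Rinv_1. apply Rinv_le_contravar; lra. }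
  set (g0 := gg n x). set (g1 := gg n (x+1)). set (g2 := gg n (x+2)).
  replace (GG n x w) with (g0 * v + (g1 - g0) * (w * v^2) + (g2 - 2*g1 + g0) * (w^2 * v^3))
    by (unfold GG, v, g0, g1, g2; field; lra).
  assert (HX : Rabs (w * v^2) <= 1). { apply Rabs_le. split; nra. }
  assert (HY : Rabs (w^2 * v^3) <= 1). { apply Rabs_le. assert (0 <= w^2 <= 1) by nra. assert (0 <= v^3 <= 1). { simpl. nra. } nra. }
  assert (Hb : Rabs (g1 - g0) <= Rabs g1 + Rabs g0).
  { unfold Rminus. eapply Rle_trans. apply Rabs_triang. rewrite Rabs_Ropp. lra. }
  assert (Hd : Rabs (g2 - 2*g1 + g0) <= Rabs g2 + 2*Rabs g1 + Rabs g0).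
  { unfold Rminus. eapply Rle_trans. apply Rabs_triang. eapply Rle_trans. apply Rplus_le_compat_r. apply Rabs_triang.
    rewrite Rabs_Ropp, Rabs_mult, (Rabs_pos_eq 2) by lra. lra. }
  eapply Rle_trans. apply Rabs_triang. eapply Rle_trans. apply Rplus_le_compat_r. apply Rabs_triang.
  rewrite (Rabs_mult g0 v), (Rabs_mult (g1-g0)), (Rabs_mult (g2 - 2*g1+g0)). rewrite (Rabs_pos_eq v) by lra.
  pose proof (Rabs_pos g0). pose proof (Rabs_pos (g1 - g0)). pose proof (Rabs_pos (g2 - 2*g1+g0)).
  pose proof (Rabs_pos (w*v^2)). pose proof (Rabs_pos (w^2*v^3)).
  assert (Rabs g0 * v <= Rabs g0) by nra.
  assert (Rabs (g1 - g0) * Rabs (w*v^2) <= Rabs (g1 - g0)) by nra.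
  assert (Rabs (g2 - 2*g1+g0) * Rabs (w^2*v^3) <= Rabs (g2 - 2*g1+g0)) by nra.
  lra.
Qed.

Lemma E_bound n N t : 1 < n -> (n-1)^4 < 16 * n * (n+1)^2 -> 0 <= t <= 1 ->
  Rabs (EE n N t) <= (cc n / 16)^(S N) * (7 * KK n * (INR N + 3)^2).
Proof.
  intros Hn Hq Ht. unfold EE.
  set (w := wt n t). set (q := cc n / 16).
  pose proof (cc_pos n Hn) as Hc.
  assert (Hq1 : q < 1).
  { unfold q, cc. assert (0 < n*(n+1)^2) by (apply Rmult_lt_0_compat; [lra| apply pow_lt; lra]).
    apply (Rmult_lt_reg_r 16). lra. replace ((n - 1) ^ 4 / (n * (n + 1) ^ 2) / 16 * 16) with ((n - 1) ^ 4 / (n * (n + 1) ^ 2)) by (field; lra).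
    apply (Rmult_lt_reg_r (n*(n+1)^2)). lra. replace ((n - 1) ^ 4 / (n * (n + 1) ^ 2) * (n * (n + 1) ^ 2)) with ((n-1)^4) by (field; lra). lra. }
  assert (Hu : 0 <= t*(1-t) <= 1/4). { split. apply Rmult_le_pos; lra. pose proof (pow2_ge_0 (t - 1/2)). simpl in *. nra. }
  assert (Hu2 : 0 <= (t*(1-t))^2 <= 1/16). { split. apply pow2_ge_0. simpl. destruct Hu as [Hu0 Hu1]. assert (t*(1-t)*(t*(1-t)) <= 1/4 * (1/4)) by (apply Rmult_le_compat; lra). lra. }
  assert (Hw : -q <= w <= 0). { unfold w, wt, q. split; nra. }
  assert (Haw : Rabs w <= q). { apply Rabs_le. lra. }
  rewrite Rabs_mult, <- RPow_abs.
  assert (H1 : Rabs w ^ S N <= q ^ S N). { apply pow_incr. split; [apply Rabs_pos| exact Haw]. }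
  assert (H2 : Rabs (GG n (INR (S N)) w) <= 7 * KK n * (INR N + 3)^2).
  { eapply Rle_trans. apply GG_bound. lra.
    rewrite S_INR. pose proof (pos_INR N).
    pose proof (abs_gg n (INR N + 1) ltac:(lra)).
    pose proof (abs_gg n (INR N + 1 + 1) ltac:(lra)).
    pose proof (abs_gg n (INR N + 1 + 2) ltac:(lra)).
    assert (0 <= KK n) by (unfold KK; pose proof (Rabs_pos (2 * (n^2 + 6*n + 1)^2 * (n^2 - 10*n + 1))); pose proof (Rabs_pos (Ppoly n)); lra).
    assert (KK n * (3*(INR N+1)^2 + 3*(INR N+1+1)^2 + (INR N+1+2)^2) <= KK n * (7 * (INR N + 3)^2)).
    { apply Rmult_le_compat_l. lra. nra. }
    nra. }
  apply Rmult_le_compat; try lra. apply pow_le, Rabs_pos. apply Rabs_pos.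
Qed.

Lemma q_bound n : 1 < n -> n < upper_bound -> (n-1)^4 < 16 * n * (n+1)^2.
Proof.
  intros Hn H. unfold upper_bound in H.
  set (r := sqrt 2) in *.
  assert (Hr2 : r * r = 2) by (unfold r; apply sqrt_sqrt; lra).
  assert (Hr : 1 < r). { assert (0 <= r) by (unfold r; apply sqrt_pos). nra. }
  set (s := sqrt ((1 + r) / 2)) in *.
  assert (Hs2 : s * s = (1 + r)/2) by (unfold s; apply sqrt_sqrt; lra).
  assert (Hs : 1 < s). { assert (0 <= s) by (unfold s; apply sqrt_pos). nra. }
  assert (H1 : n * (s - 1) < s + 1).
  { apply (Rmult_lt_compat_r (s-1)) in H; [|lra].
    replace ((s + 1) / (s - 1) * (s - 1)) with (s+1) in H by (field; lra). exact H. }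
  assert (H2 : s * (n - 1) < n + 1) by lra.
  assert (H3 : s*s*((n-1)*(n-1)) < (n+1)*(n+1)).
  { assert (0 < s*(n-1)) by nra. nra. }
  rewrite Hs2 in H3.
  set (a := (n-1)*(n-1)) in *. set (b := (n+1)*(n+1)) in *.
  assert (Ha : 0 < a) by (unfold a; nra).
  assert (P1 : 0 < b - (1+r)/2 * a) by lra.
  assert (P2 : 0 < b - (1-r)/2 * a) by (unfold b; nra).
  assert (P3 : 0 < (b - (1+r)/2 * a) * (b - (1-r)/2 * a)) by (apply Rmult_lt_0_compat; lra).
  replace ((b - (1+r)/2 * a) * (b - (1-r)/2 * a)) with (b*b - a*b - (r*r - 1)/4 * a*a) in P3 by field.
  rewrite Hr2 in P3.
  replace ((n-1)^4) with (a*a) by (unfold a; ring).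
  replace (16 * n * (n+1)^2) with (4 * (b - a) * b) by (unfold a, b; ring).
  nra.
Qed.

Theorem corollary1p3 (n : R) (h1 : 1 < n) (h2 : n < upper_bound) :
  is_series (term n)
    (6 * n * (n + 1) * (n - 1)^3 * ln n - 32 * n * (n + 1)^2 * (n^2 - 4*n + 1)).
Proof.
  pose proof (q_bound n h1 h2) as Hq.
  set (q := cc n / 16).
  assert (Hq0 : 0 < q) by (unfold q; pose proof (cc_pos n h1); lra).
  assert (Hq1 : q < 1).
  { unfold q, cc. assert (0 < n*(n+1)^2) by (apply Rmult_lt_0_compat; [lra| apply pow_lt; lra]).
    apply (Rmult_lt_reg_r 16). lra. replace ((n - 1) ^ 4 / (n * (n + 1) ^ 2) / 16 * 16) with ((n - 1) ^ 4 / (n * (n + 1) ^ 2)) by (field; lra).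
    apply (Rmult_lt_reg_r (n*(n+1)^2)). lra. replace ((n - 1) ^ 4 / (n * (n + 1) ^ 2) * (n * (n + 1) ^ 2)) with ((n-1)^4) by (field; lra). lra. }
  set (Bd := fun N : nat => q^(S N) * (7 * KK n * (INR N + 3)^2)).
  assert (HB : is_lim_seq Bd 0).
  { pose proof (lim_poly_geom q (conj Hq0 Hq1)) as L.
    apply (is_lim_seq_incr_n _ 3) in L.
    apply (is_lim_seq_scal_l _ (7 * KK n / q^2)) in L.
    replace (Rbar_mult (7 * KK n / q ^ 2) 0) with (Finite 0) in L by (simpl; f_equal; ring).
    eapply is_lim_seq_ext; [| exact L].
    intros N. unfold Bd. rewrite plus_INR. replace (INR 3) with 3 by (simpl; ring).
    replace (N + 3)%nat with (S N + 2)%nat by lia. rewrite pow_add.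
    field. lra. }
  assert (He : is_lim_seq (fun N => RInt (EE n N) 0 1) 0).
  { apply (is_lim_seq_le_le (fun N => - Bd N) _ Bd).
    - intros N.
      assert (HE : ex_RInt (EE n N) 0 1).
      { apply (@ex_RInt_continuous R_CompleteNormedModule). intros z _. apply E_cont; exact h1. }
      pose proof (abs_RInt_le_const (EE n N) 0 1 (Bd N) ltac:(lra) HE) as HA.
      assert (Rabs (RInt (EE n N) 0 1) <= Bd N).
      { replace (Bd N) with ((1 - 0) * Bd N) by ring. apply HA. intros t Ht. apply E_bound; auto. }
      pose proof (Rle_abs (RInt (EE n N) 0 1)). pose proof (Rle_abs (- RInt (EE n N) 0 1)).
      rewrite Rabs_Ropp in *. lra.
    - replace (Finite 0) with (Rbar_opp 0) by (simpl; f_equal; ring).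
      apply -> is_lim_seq_opp. exact HB.
    - exact HB. }
  pose proof (is_lim_seq_minus' _ _ (RHS n) 0 (is_lim_seq_const (RHS n)) He) as L.
  replace (RHS n - 0) with (RHS n) in L by ring.
  assert (L' : is_lim_seq (@sum_n R_AbelianMonoid (term n)) (RHS n)).
  { eapply is_lim_seq_ext; [| exact L]. intros N. simpl. rewrite sum_repr by exact h1. reflexivity. }
  exact L'.
Qed.
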